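(* Let $P=(p_{i,j})_{i,j=1}^N$ be an irreducible stochastic matrix, let $(X_m)_{m\ge0}$ be the Markov chain with transition matrix $P$, and let $p^n_{i,j}$ and $s_n$ be the GTH elimination quantities. For $2\le n\le N$, let $\tau_n=\inf\{m\ge1: X_m\in\{1,\dots,n-1\}\}$. Define: - for $1\le i<n$, $r_{i,n}=\mathbb E_i\big[\#\{m: 1\le m<\tau_n,\ X_m=n\}\big]$, the expected number of visits to $n$ before returning to $\{1,\dots,n-1\}$, starting from $i$; - for $1\le j<n$, $g_{n,j}=\mathbb P_n(X_{\tau_n}=j)$, the probability that, starting from $n$, the first state visited in $\{1,\dots,n-1\}$ is $j$; - for $1\le n\le N$, $\psi_n=p^n_{n,n}$; in particular $\psi_1=p^1_{1,1}=1$. Then, for $2\le n\le N$ and $1\le i,j\le n-1$, $$r_{i,n}=\frac{p^n_{i,n}}{s_n},\qquad g_{n,j}=\frac{p^n_{n,j}}{s_n}.$$ Moreover, $$I-P=(I-R_U)(I-\Psi_D)(I-G_L),$$ where: - $R_U$ is the $N\times N$ strictly upper triangular matrix with $(i,n)$ entry $r_{i,n}$ for $i<n$; - $\Psi_D=\mathrm{diag}(\psi_1,\dots,\psi_N)$; - $G_L$ is the $N\times N$ strictly lower triangular matrix with $(n,j)$ entry $g_{n,j}$ for $j<n$.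
   Context: GTH elimination: set $p^N_{i,j}=p_{i,j}$ for $1\le i,j\le N$. For $n=N,N-1,\dots,2$, set $s_n=\sum_{k=1}^{n-1}p^n_{n,k}$ and $$p^{n-1}_{i,j}=p^n_{i,j}+\frac{p^n_{i,n}p^n_{n,j}}{s_n}\qquad\text{for }1\le i,j\le n-1.$$ Irreducibility of $P$ guarantees that $s_n>0$ for all $n$. $\mathbb E_i$ and $\mathbb P_i$ denote expectation and probability for the chain started at $X_0=i$. *)

(* Defs.v *)
From HB Require Import structures.
From mathcomp Require Import all_boot all_order all_algebra.
From mathcomp Require Import all_classical all_reals all_analysis.

Set Implicit Arguments.
Unset Strict Implicit.
Unset Printing Implicit Defensive.

Import Order.TTheory GRing.Theory Num.Theory.
Local Open Scope ring_scope.

(* States of the chain are the ordinals 'I_N; the paper's state k (1 <= k <= N)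
   is the ordinal with value k-1. *)

Section Defs.
Variables (R : realType) (N : nat).
Implicit Types (P A : 'M[R]_N).

Definition stochastic P : Prop :=
  (forall i j, 0 <= P i j) /\ (forall i, \sum_j P i j = 1).

Definition irreducible P : Prop :=
  forall i j, exists m : nat, 0 < (P ^+ m) i j.

Definition gth_s A (p : 'I_N) : R := \sum_(k < N | (k < p)%N) A p k.

Definition gth_elim A (p : 'I_N) : 'M[R]_N :=
  \matrix_(i, j) (if (i < p)%N && (j < p)%N
                  then A i j + A i p * A p j / gth_s A p
                  else A i j).

(* gth P n = the paper's matrix p^{n+1} (n is 0-based): eliminate pivots
   N-1, N-2, ..., n+1 (0-based) in this order, starting from p^N = P. *)
Definition gth P (n : 'I_N) : 'M[R]_N :=
  foldl gth_elim P [seq k <- rev (enum 'I_N) | (n < (k : 'I_N))%N].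

Definition gthS P (n : 'I_N) : R := gth_s (gth P n) n.

Definition psi P (n : 'I_N) : R := gth P n n n.

(* For a trajectory x = (X_1, ..., X_m) of the chain started at X_0 = i,
   P_i(X_1 = x_1, ..., X_m = x_m) = p_{i,x_1} p_{x_1,x_2} ... p_{x_{m-1},x_m}. *)
Definition pathProb P (i : 'I_N) (m : nat) (x : m.-tuple 'I_N) : R :=
  \prod_(k < m) P (nth i (i :: x) k) (nth i (i :: x) k.+1).

Definition Prob P (i : 'I_N) (m : nat) (E : pred (m.-tuple 'I_N)) : R :=
  \sum_(x : m.-tuple 'I_N | E x) pathProb P i x.

(* If no such k <= m, the value is m+1,
   which correctly encodes the events {tau_n = k} and {k < tau_n} for k <= m. *)
Definition tauT (n : 'I_N) (m : nat) (x : m.-tuple 'I_N) : nat :=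
  (find (fun y : 'I_N => (y < n)%N) x).+1.

Local Open Scope ereal_scope.

(* r_{i,n} = E_i[#{m : 1 <= m < tau_n, X_m = n}]
           = sum_{m >= 1} P_i(m < tau_n, X_m = n). *)
Definition rvis P (i n : 'I_N) : \bar R :=
  \sum_(0 <= m <oo)
    (Prob P i (fun x : m.+1.-tuple 'I_N =>
        (m.+1 < tauT n x)%N && (last i x == n)))%:E.

Definition ghit P (n j : 'I_N) : \bar R :=
  \sum_(0 <= m <oo)
    (Prob P n (fun x : m.+1.-tuple 'I_N =>
        (tauT n x == m.+1) && (last n x == j)))%:E.

Local Close Scope ereal_scope.

Definition RU P : 'M[R]_N :=
  \matrix_(i, k) (if (i < k)%N then fine (rvis P i k) else 0).
Definition PsiD P : 'M[R]_N :=
  \matrix_(i, j) (if i == j then psi P i else 0).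
Definition GL P : 'M[R]_N :=
  \matrix_(k, j) (if (j < k)%N then fine (ghit P k j) else 0).

End Defs.

(* Main.v *)
Require Import Defs.
From HB Require Import structures.
From mathcomp Require Import all_boot all_order all_algebra.
From mathcomp Require Import all_classical all_reals all_analysis.
From mathcomp Require Import ring lra zify.
Import Order.TTheory GRing.Theory Num.Theory.
Local Open Scope ring_scope.

Set Implicit Arguments.
Unset Strict Implicit.
Unset Printing Implicit Defensive.


Section Basic.
Variables (R : realType) (N : nat).

Definition pw (A : 'M[R]_N) (m : nat) : 'M[R]_N := iter m (mulmx A) 1%:M.

Lemma pw0 A : pw A 0 = 1%:M. Proof. by []. Qed.
Lemma pwS A m : pw A m.+1 = A *m pw A m. Proof. by []. Qed.
Lemma pwD A a b : pw A (a + b) = pw A a *m pw A b.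
Proof.
elim: a => [|a IH]; first by rewrite add0n pw0 mul1mx.
by rewrite addSn !pwS IH mulmxA.
Qed.
Lemma pwSr A m : pw A m.+1 = pw A m *m A.
Proof. by rewrite -addn1 pwD pwS pw0 mulmx1. Qed.
Lemma pw_exp A m : A ^+ m = pw A m.
Proof.
elim: m => [|m IH]; first by rewrite expr0.
by rewrite exprS IH pwS mulmxE.
Qed.

Fixpoint pp (A : 'M[R]_N) (i : 'I_N) (s : seq 'I_N) : R :=
  if s is y :: t then A i y * pp A y t else 1.

Lemma pp_prod (A : 'M[R]_N) i (s : seq 'I_N) :
  \prod_(0 <= k < size s) A (nth i (i :: s) k) (nth i (i :: s) k.+1) = pp A i s.
Proof.
elim: s i => [|y t IH] i /=; first by rewrite big_geq.
rewrite big_nat_recl //= -(IH y); congr (_ * _).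
apply: eq_big_nat => k /andP[_ hk].
rewrite /= (set_nth_default y i (_ : k < size (y :: t))%N) /=; last by rewrite ltnS ltnW.
by rewrite (set_nth_default y i hk).
Qed.

Lemma pathProb_pp (A : 'M[R]_N) i m (x : m.-tuple 'I_N) : pathProb A i x = pp A i x.
Proof. by rewrite /pathProb -(pp_prod A i x) size_tuple big_mkord. Qed.

Lemma sum_tuple0 (F : 0.-tuple 'I_N -> R) : \sum_(x : 0.-tuple 'I_N) F x = F [tuple].
Proof.
rewrite (big_pred1 [tuple]) // => t /=; symmetry; apply/eqP/val_inj; by case: t => -[].
Qed.

Lemma sum_tupleS m (F : m.+1.-tuple 'I_N -> R) :
  \sum_(x : m.+1.-tuple 'I_N) F x =
  \sum_(y : 'I_N) \sum_(t : m.-tuple 'I_N) F [tuple of y :: t].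
Proof.
rewrite pair_big /=.
rewrite (reindex (fun p : 'I_N * m.-tuple 'I_N => [tuple of p.1 :: p.2])) //=.
exists (fun x : m.+1.-tuple 'I_N => (thead x, [tuple of behead x])) => [[y t]|x] _ /=.
  by congr (_, _); apply: val_inj.
by apply: val_inj; rewrite /= [in RHS](tuple_eta x).
Qed.

End Basic.


Section Steps.
Variables (R : realType) (N : nat) (P : 'M[R]_N) (n : nat).

Definition Am : 'M[R]_N := \matrix_(k, l) (if (n <= l)%N then P k l else 0).

Definition pr (y : 'I_N) := (y < n)%N.

Lemma r_step m (j : 'I_N) k : (n <= j)%N ->
  \sum_(x : m.+1.-tuple 'I_N)
     (if (m.+1 < (find pr x).+1)%N && (last k x == j) then pp P k x else 0)
  = (pw Am m *m P) k j.
Proof.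
move=> nj; elim: m k => [|m IH] k.
  rewrite sum_tupleS pw0 mul1mx.
  under eq_bigr do rewrite sum_tuple0.
  rewrite (bigD1 j) //= big1 => [|y /negPf yj]; last by rewrite yj andbF.
  rewrite /pr /=; have -> : (j < n)%N = false by rewrite ltnNge nj.
  by rewrite /= eqxx mulr1 addr0.
rewrite sum_tupleS pwS -mulmxA mxE.
apply: eq_bigr => y _; rewrite !mxE; have := IH y; rewrite mxE => <-.
rewrite big_distrr /=.
rewrite /pr; case: ltnP => hy /=.
  by rewrite big1 // big1 // => ? _; rewrite mul0r.
by apply: eq_bigr => t _; rewrite !ltnS; case: ifP => _; rewrite ?mulr0.
Qed.

Lemma g_step m (j : 'I_N) k : (j < n)%N ->
  \sum_(x : m.+1.-tuple 'I_N)
     (if ((find pr x).+1 == m.+1) && (last k x == j) then pp P k x else 0)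
  = (pw Am m *m P) k j.
Proof.
move=> nj; elim: m k => [|m IH] k.
  rewrite sum_tupleS pw0 mul1mx.
  under eq_bigr do rewrite sum_tuple0.
  rewrite (bigD1 j) //= big1 => [|y /negPf yj]; last by rewrite yj andbF.
  have pj : pr j = true by exact: nj.
  by rewrite /= pj !eqxx mulr1 addr0.
rewrite sum_tupleS pwS -mulmxA mxE.
apply: eq_bigr => y _; rewrite !mxE; have := IH y; rewrite mxE => <-.
rewrite big_distrr /=.
rewrite /pr; case: ltnP => hy /=.
  by rewrite big1 // big1 // => ? _; rewrite mul0r.
by apply: eq_bigr => t _; case: ifP => _; rewrite ?mulr0.
Qed.

End Steps.


Lemma exists_pow_le (R : realType) (c e : R) : 0 <= c < 1 -> 0 < e ->
  exists j : nat, c ^+ j <= e.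
Proof.
move=> /andP[c0 c1] e0.
have hc : `|c| < 1 by rewrite ger0_norm.
have := cvg_expr hc.
move/cvgrPdist_le => /(_ e e0) [j _ hj].
exists j; have := hj j (leqnn j); rewrite /= sub0r normrN ger0_norm //.
exact: exprn_ge0.
Qed.

Lemma le_sum_one (R : realType) (N : nat) (F : 'I_N -> R) k :
  (forall l, 0 <= F l) -> F k <= \sum_l F l.
Proof.
move=> h; rewrite (bigD1 k) //= lerDl; apply: sumr_ge0 => l _; exact: h.
Qed.

Section Analysis.
Variables (R : realType) (N : nat) (P : 'M[R]_N).
Hypothesis hS : stochastic P.
Hypothesis hI : irreducible P.
Variables (n : nat) (j0 : 'I_N).
Hypothesis hj0 : (j0 < n)%N.

Local Notation A := (Am P n).

Definition w M k := \sum_l pw A M k l.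

Lemma P_ge0 k l : 0 <= P k l. Proof. by case: hS. Qed.

Lemma A_ge0 k l : 0 <= A k l.
Proof. by rewrite mxE; case: ifP => // _; exact: P_ge0. Qed.

Lemma A_le k l : A k l <= P k l.
Proof. by rewrite mxE; case: ifP => // _; exact: P_ge0. Qed.

Lemma pw_ge0 (B : 'M[R]_N) M k l : (forall a b, 0 <= B a b) -> 0 <= pw B M k l.
Proof.
move=> hB; elim: M k l => [|M IH] k l; first by rewrite pw0 mxE ler0n.
rewrite pwS mxE; apply: sumr_ge0 => y _; apply: mulr_ge0 => //; exact: hB.
Qed.

Lemma pwA_ge0 M k l : 0 <= pw A M k l.
Proof. exact: pw_ge0 A_ge0. Qed.

Lemma rowA_le1 k : \sum_l A k l <= 1.
Proof.
case: hS => _ h; rewrite -(h k); apply: ler_sum => l _; exact: A_le.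
Qed.

Lemma w_ge0 M k : 0 <= w M k.
Proof. apply: sumr_ge0 => l _; exact: pwA_ge0. Qed.

Lemma wD a b k : w (a + b) k = \sum_y pw A a k y * w b y.
Proof.
rewrite /w pwD.
under eq_bigr do rewrite mxE.
rewrite exchange_big /=; apply: eq_bigr => y _; by rewrite big_distrr.
Qed.

Lemma w1 k : w 1 k = \sum_l A k l.
Proof. by rewrite /w; apply: eq_bigr => l _; rewrite pwS pw0 mulmx1. Qed.

Lemma w_dec M k : w M.+1 k <= w M k.
Proof.
rewrite -addn1 wD [X in _ <= X]/w ler_sum // => y _.
by rewrite w1 ler_piMr ?pwA_ge0 ?rowA_le1.
Qed.

Lemma w_mono M M' k : (M <= M')%N -> w M' k <= w M k.
Proof.
move=> /subnK <-; elim: (M' - M)%N => [|d IH]; first by rewrite add0n.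
by rewrite addSn; apply: le_trans (w_dec _ _) IH.
Qed.

Lemma w0 k : w 0 k = 1.
Proof.
rewrite /w (bigD1 k) //= big1 => [|l lk]; last by rewrite ?pw0 mxE eq_sym (negPf lk).
by rewrite ?pw0 mxE eqxx addr0.
Qed.

Lemma pw_leP M k l : pw A M k l <= pw P M k l.
Proof.
elim: M k l => [|M IH] k l; first by [].
rewrite !pwS !mxE; apply: ler_sum => y _.
apply: ler_pM; [exact: A_ge0|exact: pwA_ge0|exact: A_le|exact: IH].
Qed.

Lemma pwP_row M k : \sum_l pw P M k l = 1.
Proof.
elim: M k => [|M IH] k.
  rewrite (bigD1 k) //= big1 => [|l lk]; last by rewrite ?pw0 mxE eq_sym (negPf lk).
  by rewrite ?pw0 mxE eqxx addr0.
rewrite pwS; under eq_bigr do rewrite mxE.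
rewrite exchange_big /=; case: hS => _ h; rewrite -(h k).
by apply: eq_bigr => y _; rewrite -big_distrr /= IH mulr1.
Qed.

Lemma pw_col0 M k : pw A M.+1 k j0 = 0.
Proof.
rewrite pwSr mxE big1 // => y _; rewrite mxE.
by rewrite leqNgt hj0 /= mulr0.
Qed.

Lemma w_lt M k : w M.+1 k + pw P M.+1 k j0 <= 1.
Proof.
rewrite -(pwP_row M.+1 k) /w (bigD1 j0) //= [X in _ <= X](bigD1 j0) //=.
rewrite pw_col0 add0r addrC lerD2r; apply: ler_sum => l _; exact: (pw_leP M.+1).
Qed.

Lemma exists_L : exists L, forall k : 'I_N, (n <= k)%N -> w L k < 1.
Proof.
suff : forall s : seq 'I_N, exists L, forall k, k \in s -> (n <= k)%N -> w L k < 1.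
  by case/(_ (enum 'I_N)) => L hL; exists L => k; apply: hL; rewrite mem_enum.
elim => [|y s [L hL]]; first by exists 0%N.
have [m hm] : exists m, (n <= y)%N -> w m y < 1.
  case: (leqP n y) => ny; last by exists 0%N.
  have [m hm] := hI y j0.
  rewrite pw_exp in hm.
  case: m hm => [|m] hm.
    by move: hm; rewrite pw0 mxE; case: eqP => [yj|] ; [move: ny; rewrite yj leqNgt hj0|rewrite ltxx].
  exists m.+1 => _; have := w_lt m y; lra.
exists (maxn L m) => k; rewrite inE => /orP[/eqP ->|ks] nk.
  by apply: le_lt_trans (w_mono _ (leq_maxr L m)) (hm nk).
by apply: le_lt_trans (w_mono _ (leq_maxl L m)) (hL k ks nk).
Qed.

Lemma exists_c L : (forall k : 'I_N, (n <= k)%N -> w L k < 1) ->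
  exists c, [/\ 0 <= c, c < 1 & forall k : 'I_N, (n <= k)%N -> w L k <= c].
Proof.
move=> hL.
suff : forall s : seq 'I_N, exists c, [/\ 0 <= c, c < 1 &
    forall k, k \in s -> (n <= k)%N -> w L k <= c].
  by case/(_ (enum 'I_N)) => c [c0 c1 hc]; exists c; split => // k; apply: hc; rewrite mem_enum.
elim => [|y s [c [c0 c1 hc]]]; first by exists 0.
case: (leqP n y) => ny; last first.
  exists c; split => // k; rewrite inE => /orP[/eqP ->|ks] nk; last exact: hc.
  by move: ny; rewrite ltnNge nk.
exists (Num.max c (w L y)); split.
- by rewrite le_max c0.
- by rewrite gt_max c1 hL.
- move=> k; rewrite inE => /orP[/eqP ->|ks] nk; rewrite le_max ?lexx ?orbT //.
  by rewrite hc.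
Qed.

Lemma small : forall e : R, 0 < e -> exists M0, forall M k, (M0 <= M)%N -> w M k <= e.
Proof.
move=> e e0.
have [L hL] := exists_L.
have [c [c0 c1 hc]] := exists_c hL.
have wK : forall k, w L.+1 k <= c.
  move=> k; rewrite -add1n wD.
  apply: le_trans (_ : \sum_y pw A 1 k y * c <= c).
    apply: ler_sum => y _; rewrite pwS pw0 mulmx1 mxE.
    case: (leqP n y) => ny; first by rewrite ler_wpM2l ?hc //; have := A_ge0 k y; rewrite mxE ny.
    by rewrite mul0r mul0r.
  rewrite -big_distrl /= -[X in X * _]/(w 1 k) ler_piMl //.
  by have := w_dec 0 k; rewrite w0.
have geo : forall j k, w (j * L.+1) k <= c ^+ j.
  elim => [|j IH] k; first by rewrite mul0n w0 expr0.
  rewrite mulSnr wD exprS.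
  apply: le_trans (_ : \sum_y pw A (j * L.+1) k y * c <= _).
    by apply: ler_sum => y _; rewrite ler_wpM2l ?pwA_ge0 ?wK.
  by rewrite -big_distrl /= mulrC ler_wpM2l // -[X in X <= _]/(w (j * L.+1) k) IH.
have [j hj] := exists_pow_le (R:=R) (c:=c) (e:=e) (introT andP (conj c0 c1)) e0.
exists (j * L.+1)%N => M k hM.
by apply: le_trans (w_mono _ hM) _; apply: le_trans (geo j k) hj.
Qed.

End Analysis.


Lemma zero_of_small (R : realType) (x C : R) : 0 <= C ->
  (forall e, 0 < e -> `|x| <= e * C) -> x = 0.
Proof.
move=> C0 h; apply/eqP; rewrite -normr_eq0; apply/eqP.
have hx := normr_ge0 x.
have C1 : 0 < C + 1 by lra.
case: (ltrP 0 `|x|) => [xp|]; last by move=> h0; apply/le_anti; rewrite h0 hx.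
have := h (`|x| / (C + 1)) (divr_gt0 xp C1).
rewrite mulrAC ler_pdivlMr // => H.
nra.
Qed.

Section Inv.
Variables (R : realType) (N : nat) (P : 'M[R]_N).
Hypothesis hS : stochastic P.
Hypothesis hI : irreducible P.
Variables (n : nat) (j0 : 'I_N).
Hypothesis hj0 : (j0 < n)%N.

Local Notation A := (Am P n).

Lemma est p (Z : 'M[R]_(N, p)) M k (l : 'I_p) :
  `|(pw A M *m Z) k l| <= w P n M k * \sum_y `|Z y l|.
Proof.
rewrite mxE; apply: le_trans (ler_norm_sum _ _ _) _.
rewrite /w big_distrl /=; apply: ler_sum => y _.
rewrite normrM ger0_norm ?pwA_ge0 //; apply: ler_wpM2l; first exact: pwA_ge0.
by apply: (le_sum_one (F := fun y => `|Z y l|)) => ?.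
Qed.

Lemma small_est p (Z : 'M[R]_(N, p)) k (l : 'I_p) e : 0 < e ->
  exists M0, forall M, (M0 <= M)%N -> `|(pw A M *m Z) k l| <= e.
Proof.
move=> e0.
set C := \sum_y `|Z y l|.
have C0 : 0 <= C by apply: sumr_ge0 => ? _.
have C1 : 0 < C + 1 by lra.
have [M0 hM0] := small hS hI hj0 (divr_gt0 e0 C1).
exists M0 => M hM; apply: le_trans (est Z M k l) _.
have h := hM0 M k hM.
apply: le_trans (_ : e / (C + 1) * C <= _).
  by rewrite ler_wpM2r.
rewrite mulrAC ler_pdivrMr //; nra.
Qed.

Lemma unitA : (1%:M - A) \in unitmx.
Proof.
rewrite -unitmx_tr unitmxE unitfE; apply/negP => /det0P [v vn0 hv].
set u := v^T.
have hu : (1%:M - A) *m u = 0.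
  rewrite /u -[1%:M - A]trmxK -trmx_mul hv; apply/matrixP => a b; rewrite !mxE. reflexivity.
have hAu : A *m u = u.
  by move/eqP: hu; rewrite mulmxBl mul1mx subr_eq0 => /eqP <-.
have hpu : forall M, pw A M *m u = u.
  by elim => [|M IH]; rewrite ?pw0 ?mul1mx // pwSr -mulmxA hAu.
move/eqP: vn0; apply; apply/matrixP => i j.
rewrite mxE (ord1 i).
have : u j 0 = 0.
  apply: (@zero_of_small R _ 1) => // e e0.
  have [M0 hM0] := small_est u j 0 e0.
  by rewrite mulr1 -{1}(hpu M0) hM0.
by rewrite /u mxE.
Qed.

Definition X := invmx (1%:M - A) *m P.

Lemma partial M :
  \sum_(0 <= m < M) pw A m *m P = X - pw A M *m X.
Proof.
have tele : (\sum_(0 <= m < M) pw A m) *m (1%:M - A) = 1%:M - pw A M.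
  elim: M => [|M IH]; first by rewrite big_geq // mul0mx pw0 subrr.
  rewrite big_nat_recr // mulmxDl IH pwSr mulmxBr mulmx1.
  by rewrite addrA subrK.
have e : P = (1%:M - A) *m X by rewrite /X mulmxA mulmxV ?mul1mx // unitA.
rewrite -mulmx_suml.
transitivity ((\sum_(0 <= m < M) pw A m) *m ((1%:M - A) *m X)); first by rewrite -e.
by rewrite mulmxA tele mulmxBl mul1mx.
Qed.

Lemma seriesX i j :
  (\sum_(0 <= m <oo) ((pw A m *m P) i j)%:E)%E = (X i j)%:E.
Proof.
apply: cvg_lim => //.
under eq_fun do rewrite sumEFin.
apply: cvg_EFin; first by near=> M.
apply/cvgrPdist_le => e e0.
have [M0 hM0] := small_est X i j e0.
near=> M.
rewrite /= -summxE partial [(X - _) i j]mxE opprD addrA subrr add0r normrN.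
rewrite (_ : (- (pw A M *m X)) i j = - (pw A M *m X) i j) ?normrN; last first.
  by rewrite [LHS]mxE.
apply: hM0.
near: M; by exists M0.
Unshelve. all: by end_near.
Qed.

End Inv.


Lemma sum_split_last (R : realType) (N : nat) (F : 'I_N -> R) (mo : 'I_N) :
  \sum_(l < N | (l < (mo : nat).+1)%N) F l = \sum_(l < N | (l < mo)%N) F l + F mo.
Proof.
rewrite (bigD1 mo) /= ?ltnSn // addrC; congr (_ + _).
by apply: eq_bigl => l; rewrite ltnS ltn_neqAle andbC; congr (_ && _).
Qed.

Lemma sum_delta (R : realType) (N : nat) (F : 'I_N -> R) (a : 'I_N) :
  \sum_k (k == a)%:R * F k = F a.
Proof.
rewrite (bigD1 a) //= eqxx mul1r big1 ?addr0 // => k /negPf ->; by rewrite mul0r.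
Qed.

Section GTH.
Variables (R : realType) (N : nat) (P : 'M[R]_N).
Hypothesis hS : stochastic P.
Hypothesis hI : irreducible P.

Lemma X_eq (n : nat) (j0 : 'I_N) (hj0 : (j0 < n)%N) (Z : 'M[R]_N) :
  (1%:M - Am P n) *m Z = P -> X P n = Z.
Proof.
move=> h; have hu := unitA hS hI hj0; rewrite /X; move: h hu.
set B := 1%:M - Am P n => h hu.
by rewrite -[in X in _ *m X]h mulKmx.
Qed.

Lemma X_row (n : nat) (j0 : 'I_N) (hj0 : (j0 < n)%N) k :
  \sum_(l < N | (l < n)%N) X P n k l = 1.
Proof.
set e : 'cV[R]_N := \col_l (if (l < n)%N then 1 else 0).
have h1 : (1%:M - Am P n) *m const_mx 1 = P *m e.
  apply/matrixP => a b; rewrite !mxE.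
  have -> : \sum_j (1%:M - Am P n) a j * const_mx 1 j b =
            \sum_j ((a == j)%:R - P a j) + \sum_j P a j * e j b.
    rewrite -big_split /=; apply: eq_bigr => l _; rewrite !mxE mulr1.
    by case: (leqP n l) => hl; rewrite ?mulr1 ?mulr0; lra.
  rewrite sumrB (bigD1 a) //= eqxx big1 ?addr0; last by move=> l /negPf; rewrite eq_sym => ->.
  by case: hS => _ ->; rewrite subrr add0r.
have h2 : X P n *m e = const_mx 1.
  by rewrite /X -mulmxA -h1 mulKmx // (unitA hS hI hj0).
have := congr1 (fun M : 'cV[R]_N => M k ord0) h2; rewrite !mxE => <-.
rewrite big_mkcond /=; apply: eq_bigr => l _; rewrite [e l _]mxE.
by case: ifP; rewrite ?mulr1 ?mulr0.
Qed.

(* Sherman-Morrison *)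
Lemma SM (n : nat) (nn : 'I_N) : val nn = n -> (0 < n)%N ->
  let Y := X P n.+1 in let d := 1 - Y nn nn in
  d != 0 /\ forall i j, X P n i j = Y i j + Y i nn * Y nn j / d.
Proof.
move=> hnn n0 Y d.
have [j0 hj0] : exists j0 : 'I_N, (j0 < n)%N.
  by exists (Ordinal (leq_ltn_trans (leq0n _) (ltn_ord nn))).
have hj1 : (j0 < n.+1)%N by apply: ltnW.
have hB : forall i k, (1%:M - Am P n) i k =
    (1%:M - Am P n.+1) i k - (k == nn)%:R * P i k.
  move=> i k; rewrite !mxE -hnn.
  have [->|knn] := eqVneq k nn.
    rewrite leqnn ltnn mul1r; lra.
  rewrite mul0r subr0.
  have : val k != val nn by [].
  by case: (ltngtP nn k) => hk //= _; rewrite ltnNge ?ltnW ?hk //= leqNgt hk.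
have hY : forall i j, \sum_k (1%:M - Am P n.+1) i k * Y k j = P i j.
  have hY0 : (1%:M - Am P n.+1) *m Y = P.
    by rewrite /Y /X mulKVmx // (unitA hS hI hj1).
  by move=> i j; have := congr1 (fun M : 'M[R]_N => M i j) hY0; rewrite mxE.
have hdn0 : d != 0.
  apply/negP => /eqP d0.
  pose u : 'cV[R]_N := col nn Y.
  have hu : (1%:M - Am P n) *m u = 0.
    apply/matrixP => i b; rewrite [LHS]mxE [RHS]mxE (ord1 b).
    under eq_bigr do rewrite hB mulrBl.
    rewrite sumrB (eq_bigr (fun k => (1%:M - Am P n.+1) i k * Y k nn)); last first.
      by move=> k _; rewrite /u [col nn Y k _]mxE.
    rewrite hY (eq_bigr (fun k => (k == nn)%:R * (P i k * Y k nn))); last first.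
      by move=> k _; rewrite /u [col nn Y k _]mxE mulrA.
    rewrite sum_delta.
    have : Y nn nn = 1 by move: d0; rewrite /d; lra.
    by move=> ->; rewrite mulr1 subrr.
  have : u = 0 by rewrite -(mulKmx (unitA hS hI hj0) u) hu mulmx0.
  move/(congr1 (fun M : 'cV[R]_N => M nn ord0)); rewrite /u [col _ _ _ _]mxE [RHS]mxE => Y0.
  by move: d0; rewrite /d Y0 subr0 => /eqP; rewrite oner_eq0.
split => //.
set Z : 'M[R]_N := \matrix_(i, j) (Y i j + Y i nn * Y nn j / d).
have -> : X P n = Z.
  apply: (X_eq hj0); apply/matrixP => i j; rewrite [LHS]mxE.
  under eq_bigr do rewrite hB [Z _ _]mxE mulrBl mulrDr.
  rewrite sumrB big_split /= hY.
  rewrite (eq_bigr (fun k => (1%:M - Am P n.+1) i k * Y k nn * (Y nn j / d))); last first.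
    by move=> k _; rewrite !mulrA.
  rewrite -big_distrl /= hY.
  rewrite (eq_bigr (fun k => (k == nn)%:R * (P i k * (Y k j + Y k nn * Y nn j / d)))); last first.
    by move=> k _; rewrite mulrA.
  rewrite sum_delta.
  rewrite /d in hdn0 *; field; exact: hdn0.
by move=> i j; rewrite mxE.
Qed.

End GTH.


Lemma filter_iota_gt m N : (m < N)%N ->
  [seq x <- iota 0 N | (m < x)%N] = iota m.+1 (N - m.+1).
Proof.
move=> mN; rewrite -{1}(subnKC mN) iotaD filter_cat add0n.
rewrite (eq_in_filter (a2 := pred0)) ?filter_pred0; last first.
  by move=> x; rewrite mem_iota add0n /= ltnS => h; rewrite ltnNge h.
rewrite (eq_in_filter (a2 := predT)) ?filter_predT //.
by move=> x; rewrite mem_iota => /andP[h _].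
Qed.

Lemma gth_list N (m : nat) : (m < N)%N ->
  map val [seq k <- rev (enum 'I_N) | (m < val k)%N] = rev (iota m.+1 (N - m.+1)).
Proof.
move=> mN.
by rewrite -(filter_map val (fun x => m < x)%N) map_rev val_enum_ord filter_rev filter_iota_gt.
Qed.

Section GTH2.
Variables (R : realType) (N : nat) (P : 'M[R]_N).

Lemma gth_top (n : 'I_N) : val n = N.-1 -> gth P n = P.
Proof.
move=> hn; rewrite /gth.
suff -> : [seq k <- rev (enum 'I_N) | (n < (k : 'I_N))%N] = [::] by [].
apply: (inj_map val_inj); rewrite gth_list // hn.
by case: N n hn => [[]//|N'] n hn /=; rewrite subnn.
Qed.

Lemma gth_step (n n' : 'I_N) : (0 < n)%N -> val n' = (val n).-1 ->
  gth P n' = gth_elim (gth P n) n.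
Proof.
move=> n0 hn'; rewrite /gth -foldl_rcons.
congr foldl; apply: (inj_map val_inj).
rewrite map_rcons !gth_list // hn' prednK //.
have -> : (N - n = (N - n.+1).+1)%N by rewrite subnSK.
by rewrite /= rev_cons.
Qed.

End GTH2.


Section Final.
Variables (R : realType) (N : nat) (P : 'M[R]_N).
Hypothesis hS : stochastic P.
Hypothesis hI : irreducible P.

Lemma AmN : Am P N = 0.
Proof. by apply/matrixP => i j; rewrite !mxE leqNgt ltn_ord. Qed.

Lemma XN : X P N = P.
Proof. by rewrite /X AmN subr0 invmx1 mul1mx. Qed.

Lemma gth_X (n : 'I_N) (i j : 'I_N) : (i <= n)%N -> (j <= n)%N ->
  gth P n i j = X P n.+1 i j.
Proof.
suff : forall d (n : 'I_N), (N - n = d.+1)%N -> forall i j : 'I_N,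
    (i <= n)%N -> (j <= n)%N -> gth P n i j = X P n.+1 i j.
  by move=> H; apply: (H (N - n).-1); rewrite prednK // subn_gt0.
elim => [|d IH] {}n hd {}i {}j hi hj.
  have hn : n.+1 = N by have := ltn_ord n; move: hd; move: (nat_of_ord n) => a; lia.
  rewrite gth_top ?hn ?XN //; first by rewrite -[X in _ = X.-1]hn.
have hn1 : (n.+1 < N)%N by move: hd; move: (nat_of_ord n) => a; lia.
set n1 : 'I_N := Ordinal hn1.
have hd1 : (N - n1 = d.+1)%N by rewrite /=; move: hd; move: (nat_of_ord n) => a; lia.
rewrite (@gth_step _ _ P n1 n) //=.
rewrite mxE /= !ltnS hi hj /=.
have j0 : 'I_N by exact: n.
have hz : (Ordinal (leq_ltn_trans (leq0n n) (ltn_ord n)) < n.+2)%N by [].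
set Y := X P n.+2.
have hs : gth_s (gth P n1) n1 = 1 - Y n1 n1.
  rewrite /gth_s (eq_bigr (fun k => Y n1 k)); last first.
    by move=> k hk; rewrite (IH n1 hd1) // ltnW.
  have := X_row hS hI hz n1; rewrite (sum_split_last _ n1) /=.
  by move=> h; rewrite -h addrK.
rewrite hs !(IH n1 hd1) //= ?ltnS //.
have [_ ->] := @SM R N P hS hI n.+1 n1 erefl erefl.
  by [].
all: exact: leqW.
Qed.

Lemma gthS_eq (n : 'I_N) : gthS P n = 1 - gth P n n n.
Proof.
have hz : (Ordinal (leq_ltn_trans (leq0n n) (ltn_ord n)) < n.+1)%N by [].
rewrite /gthS /gth_s (eq_bigr (fun k => X P n.+1 n k)); last first.
  by move=> k hk; rewrite gth_X // ltnW.
have := X_row hS hI hz n; rewrite (sum_split_last _ n) /= => h.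
by rewrite gth_X // -h addrK.
Qed.

Lemma gthS_neq0 (n : 'I_N) : (0 < n)%N -> gthS P n != 0.
Proof.
move=> n0; have [h _] := @SM R N P hS hI n n erefl n0.
by rewrite gthS_eq gth_X.
Qed.

Lemma gth_rec (n n' i j : 'I_N) : (0 < n)%N -> val n' = (val n).-1 ->
  (i < n)%N -> (j < n)%N ->
  gth P n' i j = gth P n i j + gth P n i n * gth P n n j / gthS P n.
Proof.
move=> n0 hn' hi hj; rewrite (gth_step P n0 hn') mxE hi hj /= /gthS.
reflexivity.
Qed.

Lemma r_val (n i : 'I_N) : (0 < n)%N -> (i < n)%N ->
  rvis P i n = (gth P n i n / gthS P n)%:E.
Proof.
move=> n0 hi.
have hz : (Ordinal (leq_ltn_trans (leq0n n) (ltn_ord n)) < n)%N by [].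
have hp : forall m, Prob P i (fun x : m.+1.-tuple 'I_N =>
    (m.+1 < tauT n x)%N && (last i x == n)) = (pw (Am P n) m *m P) i n.
  move=> m; rewrite -(r_step P m i (leqnn n)) /Prob big_mkcond /=.
  by apply: eq_bigr => x _; rewrite pathProb_pp /tauT /pr.
rewrite /rvis (eq_eseriesr (g := fun m => ((pw (Am P n) m *m P) i n)%:E)); last first.
  by move=> m _; rewrite hp.
rewrite (seriesX hS hI hz); apply: congr1.
have [dn0 hX] := @SM R N P hS hI n n erefl n0.
rewrite [X P n i n]hX (gthS_eq n) (@gth_X n n n (leqnn n) (leqnn n)).
rewrite (@gth_X n i n (ltnW hi) (leqnn n)).
move: dn0; set Y := X P n.+1 => dn0.
field; exact: dn0.
Qed.

Lemma g_val (n j : 'I_N) : (0 < n)%N -> (j < n)%N ->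
  ghit P n j = (gth P n n j / gthS P n)%:E.
Proof.
move=> n0 hj.
have hz : (Ordinal (leq_ltn_trans (leq0n n) (ltn_ord n)) < n)%N by [].
have hp : forall m, Prob P n (fun x : m.+1.-tuple 'I_N =>
    (tauT n x == m.+1) && (last n x == j)) = (pw (Am P n) m *m P) n j.
  move=> m; rewrite -(g_step P m n hj) /Prob big_mkcond /=.
  by apply: eq_bigr => x _; rewrite pathProb_pp /tauT /pr.
rewrite /ghit (eq_eseriesr (g := fun m => ((pw (Am P n) m *m P) n j)%:E)); last first.
  by move=> m _; rewrite hp.
rewrite (seriesX hS hI hz); apply: congr1.
have [dn0 hX] := @SM R N P hS hI n n erefl n0.
rewrite [X P n n j]hX (gthS_eq n) (@gth_X n n n (leqnn n) (leqnn n)).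
rewrite (@gth_X n n j (leqnn n) (ltnW hj)).
move: dn0; set Y := X P n.+1 => dn0.
field; exact: dn0.
Qed.

End Final.


Section Fact.
Variables (R : realType) (N : nat) (P : 'M[R]_N).
Hypothesis hS : stochastic P.
Hypothesis hI : irreducible P.

Local Notation T := (gth P).
Local Notation s := (gthS P).
Local Notation U := (1%:M - RU P).
Local Notation L := (1%:M - GL P).

Lemma U_lt (i k : 'I_N) : (k < i)%N -> U i k = 0.
Proof.
move=> ki; rewrite !mxE.
have -> : (i == k) = false by apply/negP => /eqP e; move: ki; rewrite e ltnn.
by rewrite ltnNge ltnW //= subrr.
Qed.

Lemma U_eq (i : 'I_N) : U i i = 1.
Proof. by rewrite !mxE eqxx ltnn subr0. Qed.

Lemma U_gt (i k : 'I_N) : (i < k)%N -> U i k = - (T k i k / s k).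
Proof.
move=> ik; rewrite !mxE ik.
have -> : (i == k) = false by apply/negP => /eqP e; move: ik; rewrite e ltnn.
rewrite (r_val hS hI (leq_ltn_trans (leq0n i) ik) ik) /=.
by rewrite sub0r.
Qed.

Lemma L_lt (k j : 'I_N) : (k < j)%N -> L k j = 0.
Proof.
move=> kj; rewrite !mxE.
have -> : (k == j) = false by apply/negP => /eqP e; move: kj; rewrite e ltnn.
by rewrite ltnNge ltnW //= subrr.
Qed.

Lemma L_eq (j : 'I_N) : L j j = 1.
Proof. by rewrite !mxE eqxx ltnn subr0. Qed.

Lemma L_gt (k j : 'I_N) : (j < k)%N -> L k j = - (T k k j / s k).
Proof.
move=> jk; rewrite !mxE jk.
have -> : (k == j) = false by apply/negP => /eqP e; move: jk; rewrite e ltnn.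
rewrite (g_val hS hI (leq_ltn_trans (leq0n j) jk) jk) /=.
by rewrite sub0r.
Qed.

Lemma D_eq (l k : 'I_N) : (1%:M - PsiD P) l k = (l == k)%:R * s l.
Proof.
rewrite !mxE; case: eqP => [->|_]; last by rewrite mul0r subr0.
by rewrite mul1r /psi (gthS_eq hS hI k).
Qed.

Lemma rhs_eq (i j : 'I_N) :
  ((1%:M - RU P) *m (1%:M - PsiD P) *m (1%:M - GL P)) i j =
  \sum_k U i k * s k * L k j.
Proof.
rewrite [LHS]mxE; apply: eq_bigr => k _; congr (_ * _).
rewrite [LHS]mxE (eq_bigr (fun l => (l == k)%:R * (U i l * s l))).
  by rewrite sum_delta.
by move=> l _; rewrite D_eq mulrCA.
Qed.

Lemma claim m (n : 'I_N) : val n = m -> forall i j : 'I_N,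
  (i <= n)%N -> (j <= n)%N ->
  (i == j)%:R - T n i j = \sum_(k < N | (k < (n : nat).+1)%N) U i k * s k * L k j.
Proof.
elim: m n => [|m IH] n hn i j hi hj.
  have ei : i = n by apply: val_inj; rewrite hn; move: hi; rewrite hn leqn0 => /eqP.
  have ej : j = n by apply: val_inj; rewrite hn; move: hj; rewrite hn leqn0 => /eqP.
  subst i j; rewrite (sum_split_last _ n) big1; last by move=> k; rewrite hn.
  by rewrite U_eq L_eq (gthS_eq hS hI n) eqxx mul1r mulr1 add0r.
have n0 : (0 < n)%N by rewrite hn.
have mN : (m < N)%N by rewrite -ltnS -hn; exact: ltnW (ltn_ord n).
set n' : 'I_N := Ordinal mN.
have hn' : val n' = (val n).-1 by rewrite hn.
have sn0 := gthS_neq0 hS hI n0.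
rewrite (sum_split_last _ n).
have -> : \sum_(k < N | (k < n)%N) U i k * s k * L k j =
          \sum_(k < N | (k < (n' : nat).+1)%N) U i k * s k * L k j.
  by apply: eq_bigl => k; rewrite hn.
case: (leqP n i) => hi2.
  have ei : i = n by apply: val_inj; apply/eqP; rewrite eqn_leq hi hi2.
  subst i.
  rewrite big1; last by move=> k hk; rewrite U_lt ?mul0r // hn.
  rewrite U_eq add0r mul1r.
  case: (leqP n j) => hj2.
    have ej : j = n by apply: val_inj; apply/eqP; rewrite eqn_leq hj hj2.
    by subst j; rewrite L_eq (gthS_eq hS hI n) eqxx mulr1.
  have -> : (n == j) = false by apply/negP => /eqP e; move: hj2; rewrite e ltnn.
  rewrite L_gt // -[false%:R]/(0%:R : R); move: sn0; set a := s n => sn0; field; exact: sn0.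
case: (leqP n j) => hj2.
  have ej : j = n by apply: val_inj; apply/eqP; rewrite eqn_leq hj hj2.
  subst j.
  rewrite big1; last by move=> k hk; rewrite L_lt ?mulr0 // hn.
  rewrite U_gt // L_eq add0r.
  have -> : (i == n) = false by apply/negP => /eqP e; move: hi2; rewrite e ltnn.
  rewrite -[false%:R]/(0%:R : R); move: sn0; set a := s n => sn0; field; exact: sn0.
have hi3 : (i <= n')%N by rewrite /= -ltnS -hn.
have hj3 : (j <= n')%N by rewrite /= -ltnS -hn.
rewrite -(IH n' erefl i j hi3 hj3) (gth_rec P n0 hn' hi2 hj2).
rewrite U_gt // L_gt //.
move: sn0; set a := s n => sn0; field; exact: sn0.
Qed.

Lemma factorization :
  1%:M - P = (1%:M - RU P) *m (1%:M - PsiD P) *m (1%:M - GL P).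
Proof.
apply/matrixP => i j; rewrite rhs_eq.
have hN : (N.-1 < N)%N by have := ltn_ord i; move: (nat_of_ord i) => a; lia.
set top : 'I_N := Ordinal hN.
have Np : (N.-1).+1 = N by rewrite prednK // (leq_ltn_trans (leq0n _) hN).
have hi : (i <= top)%N by rewrite /= -ltnS Np.
have hj : (j <= top)%N by rewrite /= -ltnS Np.
have h := claim erefl hi hj.
rewrite (gth_top P (n := top)) /= in h; last by [].
rewrite [LHS]mxE [(1%:M : 'M[R]_N) i j]mxE [(- P) i j]mxE h.
by apply: eq_bigl => k; rewrite Np ltn_ord.
Qed.

End Fact.

Theorem mainTheorem3 (R : realType) (N : nat) (P : 'M[R]_N)
    (hS : stochastic P) (hI : irreducible P) :
  (forall n i : 'I_N, (0 < n)%N -> (i < n)%N ->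
     rvis P i n = (gth P n i n / gthS P n)%:E) /\
  (forall n j : 'I_N, (0 < n)%N -> (j < n)%N ->
     ghit P n j = (gth P n n j / gthS P n)%:E) /\
  1%:M - P = (1%:M - RU P) *m (1%:M - PsiD P) *m (1%:M - GL P).
Proof.
split; [|split].
- by move=> n i n0 hi; exact: (r_val hS hI n0 hi).
- by move=> n j n0 hj; exact: (g_val hS hI n0 hj).
- exact: (factorization hS hI).
Qed.
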